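(* Let $D$ be a rank two filtered $(\varphi,N,L/K,E)$-module with $N\neq0$, with basis $\underline\eta$ such that $[\varphi]_{\underline\eta}=\mathrm{diag}(p\delta\cdot\vec1,\delta\cdot\vec1)$ ($\delta\in E^\times$), $[N]_{\underline\eta}=\begin{pmatrix}\vec0&\vec0\\ \vec1&\vec0\end{pmatrix}$, and filtration $\mathcal F(\vec x,\vec y;\underline k)$ with $k_i\ge0$. Then the $G$-action is given by $[g]_{\underline\eta}=\mathrm{diag}(\chi(g)\cdot\vec1,\chi(g)\cdot\vec1)$ for a single character $\chi:G\to E^\times$, and $D$ is weakly admissible if and only if $$2ef\,v_p(\delta)+ef=\sum_{i=0}^{m-1}k_i\quad\text{and}\quad ef\,v_p(\delta)\ge\sum_{\{i:x_i=0\}}k_i.$$ If $D$ is weakly admissible, it is irreducible if and only if the inequality is strict; if equality holds, $D_2=E^f\eta_2$ is its only nonzero proper weakly admissible sub-object.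
   Context: Setting: $p$ prime, $K/\mathbb{Q}_p$ finite, $L/K$ finite Galois, $G=\mathrm{Gal}(L/K)$, $L_0$ maximal unramified subfield of $L$, $f=[L_0:\mathbb{Q}_p]$, $e=[L:L_0]$, $m=ef$, $E$ finite over $\mathbb{Q}_p$ containing all embeddings of $L$; $v_p(p)=1$. $L_0\otimes E\cong E^f$, $L\otimes E\cong E^m$, $E^f\to E^m$ is $\vec a\mapsto\vec a^{\otimes e}$ ($e$ concatenated copies); $\varphi(x_0,\dots,x_{f-1})=(x_1,\dots,x_{f-1},x_0)$; $c\cdot\vec 1=(c,\dots,c)$; $G$ acts on $E^f$ via $g|_{L_0}$. A rank two filtered $(\varphi,N,L/K,E)$-module: free $E^f$-module $D$ of rank 2 with $\varphi$-semilinear bijection $\varphi$, nilpotent $E^f$-linear $N$ with $N\varphi=p\varphi N$, a filtration on $D_L=L\otimes_{L_0}D$, and a semilinear $E$-linear $G$-action commuting with $\varphi,N$ and preserving the filtration; matrices via $(T\eta_1,T\eta_2)=(\eta_1,\eta_2)[T]$. Filtration $\mathcal F(\vec x,\vec y;\underline k)$: $\mathrm{Fil}^jD_L=D_L$ ($j\le0$), $\mathrm{Fil}^jD_L=E^mf_{\{i:k_i\ge j\}}(\vec x(1\otimes\eta_1)+\vec y(1\otimes\eta_2))$ ($j\ge1$), $(x_i,y_i)\ne(0,0)$, $f_J=\sum_{s\in J}e_s$. $t_H(M)=\sum_s\sum_j j\dim_E(e_s\mathrm{Fil}^jM/e_s\mathrm{Fil}^{j+1}M)$; for a $\varphi$-stable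 free $D'$ with $[\varphi|_{D'}]=A$, $t_N(D')=e\,v_p(\prod_j(\det A)_j)$; $D'_L$ has the induced filtration. $D$ is weakly admissible if $t_H(D_L)=t_N(D)$ and $t_H(D'_L)\le t_N(D')$ for every $E^f$-submodule $D'$ stable under $\varphi$ and $N$. A weakly admissible sub-object is a nonzero submodule stable under $\varphi$, $N$, $G$ with $t_H(D'_L)=t_N(D')$; irreducible means no proper such sub-object. *)

(* Defs.v *)
From HB Require Import structures.
From mathcomp Require Import all_boot all_fingroup all_order all_algebra.
Set Implicit Arguments. Unset Strict Implicit. Unset Printing Implicit Defensive.
Import Order.TTheory GRing.Theory Num.Theory.
Local Open Scope ring_scope.

(* L0 (x) E = E^f indexed by 'I_f, L (x) E = E^m (m = e f) indexed by
   'I_(e*f); the map E^f -> E^m (e concatenated copies) sends component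
   s of E^m to component (s mod f) of E^f. *)
Lemma resf_proof (f e : nat) (s : 'I_(e * f)) : (s %% f < f)%N.
Proof.
case: f s => [|f] s; last by rewrite ltn_mod.
case: s => i hi; exfalso; move: hi; by rewrite muln0.
Qed.
Definition resf (f e : nat) (s : 'I_(e * f)) : 'I_f := Ordinal (resf_proof s).

(* An element v = v_1 eta_1 + v_2 eta_2 of D (v_i in E^f) is stored as
   the family t |-> (v_1(t), v_2(t))^T of column vectors.  A map T with
   matrix [T] (convention (T eta_1, T eta_2) = (eta_1, eta_2)[T]) is
   stored as the family t |-> [T](t) of its components. *)
Definition DT (E : fieldType) (f : nat) := 'I_f -> 'cV[E]_2.

(* phi(x_0,..,x_{f-1}) = (x_1,..,x_{f-1},x_0): component t of phi(v)
   is [phi](t) * v(t+1). *)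
Definition phi_op (E : fieldType) (f : nat) (A : 'I_f -> 'M[E]_2) (v : DT E f)
  : DT E f := fun t => A t *m v (ordS t).
Definition lin_op (E : fieldType) (f : nat) (A : 'I_f -> 'M[E]_2) (v : DT E f)
  : DT E f := fun t => A t *m v t.
(* g acts on E^f by (g.x)_t = x_(act t); a g-semilinear map with matrix
   [g] sends v to t |-> [g](t) * v(act t). *)
Definition semi_op (E : fieldType) (f : nat) (act : 'I_f -> 'I_f)
  (A : 'I_f -> 'M[E]_2) (v : DT E f) : DT E f := fun t => A t *m v (act t).

Definition phi_diag (E : fieldType) (f : nat) (p : nat) (delta : E)
  : 'I_f -> 'M[E]_2 :=
  fun _ => \matrix_(i < 2, j < 2)
             (if i == j then (if i == 0 then p%:R * delta else delta) else 0).
Definition N_std (E : fieldType) (f : nat) : 'I_f -> 'M[E]_2 :=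
  fun _ => \matrix_(i < 2, j < 2) (if (i == 1) && (j == 0) then 1 else 0).

(* A filtration on D_L: Fil j s = row space (in coordinates w.r.t.
   1 (x) eta_1, 1 (x) eta_2) of the s-component e_s Fil^j D_L. *)
Definition Fil_xy (E : fieldType) (m : nat) (x y : 'I_m -> E) (k : 'I_m -> int)
  : int -> 'I_m -> 'M[E]_2 :=
  fun j s => if j <= 0 then 1%:M
             else if j <= k s then
               (<< \row_(i < 2) (if i == 0 then x s else y s) >>)%MS
             else 0.

Definition Gaction_ok (E : fieldType) (G : finGroupType) (f e : nat)
  (act : G -> 'I_f -> 'I_f) (actm : G -> 'I_(e * f) -> 'I_(e * f))
  (gA : G -> 'I_f -> 'M[E]_2) (phiA NA : 'I_f -> 'M[E]_2)
  (Fil : int -> 'I_(e * f) -> 'M[E]_2) : Prop :=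
  (* G acts on E^f = L0 (x) E through g|_{L0}, a power of Frobenius *)
  [/\ [/\ (forall t, act 1%g t = t),
      (forall g h t, act (g * h)%g t = act h (act g t)) &
      (forall g t, act g (ordS t) = ordS (act g t))],
  (* G acts on E^m = L (x) E compatibly with E^f -> E^m *)
      [/\ (forall s, actm 1%g s = s),
      (forall g h s, actm (g * h)%g s = actm h (actm g s)) &
      (forall g s, resf (actm g s) = act g (resf s))] &
   [/\ (forall v t, semi_op (act 1%g) (gA 1%g) v t = v t),
       (forall g h v t, semi_op (act (g * h)%g) (gA (g * h)%g) v t
                        = semi_op (act g) (gA g) (semi_op (act h) (gA h) v) t),
       (forall g v t, phi_op phiA (semi_op (act g) (gA g) v) t
                      = semi_op (act g) (gA g) (phi_op phiA v) t),
       (forall g v t, lin_op NA (semi_op (act g) (gA g) v) t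
                      = semi_op (act g) (gA g) (lin_op NA v) t) &
       (forall g j s,
          (Fil j (actm g s) *m (gA g (resf s))^T <= Fil j s)%MS)]].

(* An E^f-submodule D' of D = family of its components e_t D' (subspaces
   of E^2, given as row spaces of coordinate rows). *)
Definition phi_stable (E : fieldType) (f : nat) (phiA : 'I_f -> 'M[E]_2)
  (V : 'I_f -> 'M[E]_2) := forall t, (V (ordS t) *m (phiA t)^T <= V t)%MS.
Definition lin_stable (E : fieldType) (f : nat) (NA : 'I_f -> 'M[E]_2)
  (V : 'I_f -> 'M[E]_2) := forall t, (V t *m (NA t)^T <= V t)%MS.
Definition G_stable (E : fieldType) (G : finGroupType) (f : nat)
  (act : G -> 'I_f -> 'I_f) (gA : G -> 'I_f -> 'M[E]_2) (V : 'I_f -> 'M[E]_2) :=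
  forall g t, (V (act g t) *m (gA g t)^T <= V t)%MS.

(* B = (b_1..b_r) is an E^f-basis of D' (row i of B t = b_i(t)). *)
Definition is_basis (E : fieldType) (f r : nat) (V : 'I_f -> 'M[E]_2)
  (B : 'I_f -> 'M[E]_(r, 2)) := forall t, row_free (B t) /\ (B t == V t)%MS.
(* A = [phi|_{D'}] in the basis B : phi(b_j) = sum_i A_ij b_i *)
Definition phi_matrix (E : fieldType) (f r : nat) (phiA : 'I_f -> 'M[E]_2)
  (B : 'I_f -> 'M[E]_(r, 2)) (A : 'I_f -> 'M[E]_r) :=
  forall t, B (ordS t) *m (phiA t)^T = (A t)^T *m B t.

(* induced filtration on D'_L = E^m D' : Fil^j D'_L = D'_L cap Fil^j D_L *)
Definition induced (E : fieldType) (f e : nat) (V : 'I_f -> 'M[E]_2)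
  (Fil : int -> 'I_(e * f) -> 'M[E]_2) : int -> 'I_(e * f) -> 'M[E]_2 :=
  fun j s => (V (resf s) :&: Fil j s)%MS.

(* t_H = sum_s sum_j j dim_E(e_s Fil^j / e_s Fil^(j+1)), the sum over j
   taken over the window lo <= j < lo + n (outside of which all graded
   pieces vanish for the filtrations considered). *)
Definition tH (E : fieldType) (m : nat) (Fil : int -> 'I_m -> 'M[E]_2)
  (lo : int) (n : nat) : int :=
  \sum_(s < m) \sum_(i < n)
     (lo + i%:Z) * ((\rank (Fil (lo + i%:Z) s))%:Z
                    - (\rank (Fil (lo + i%:Z + 1) s))%:Z).

Definition tN (E : fieldType) (vp : E -> rat) (f e r : nat)
  (A : 'I_f -> 'M[E]_r) : rat := e%:R * vp (\prod_(t < f) \det (A t)).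

Definition weakly_admissible (E : fieldType) (vp : E -> rat) (f e : nat)
  (phiA NA : 'I_f -> 'M[E]_2) (Fil : int -> 'I_(e * f) -> 'M[E]_2)
  (lo : int) (n : nat) : Prop :=
  ((tH Fil lo n)%:~R = tN vp e phiA) /\
  (forall V : 'I_f -> 'M[E]_2, phi_stable phiA V -> lin_stable NA V ->
   forall (r : nat) (B : 'I_f -> 'M[E]_(r, 2)) (A : 'I_f -> 'M[E]_r),
     is_basis V B -> phi_matrix phiA B A ->
     (tH (induced V Fil) lo n)%:~R <= tN vp e A).

Definition WA_subobject (E : fieldType) (vp : E -> rat) (G : finGroupType)
  (f e : nat) (phiA NA : 'I_f -> 'M[E]_2) (act : G -> 'I_f -> 'I_f)
  (gA : G -> 'I_f -> 'M[E]_2) (Fil : int -> 'I_(e * f) -> 'M[E]_2)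
  (lo : int) (n : nat) (V : 'I_f -> 'M[E]_2) : Prop :=
  [/\ exists t, V t != 0,
      phi_stable phiA V, lin_stable NA V, G_stable act gA V &
      exists (r : nat) (B : 'I_f -> 'M[E]_(r, 2)) (A : 'I_f -> 'M[E]_r),
        [/\ is_basis V B, phi_matrix phiA B A &
            (tH (induced V Fil) lo n)%:~R = tN vp e A]].

Definition proper_subobj (E : fieldType) (f : nat) (V : 'I_f -> 'M[E]_2) : Prop :=
  ~ (forall t, (V t == 1%:M)%MS).

Definition irreducible (E : fieldType) (vp : E -> rat) (G : finGroupType)
  (f e : nat) (phiA NA : 'I_f -> 'M[E]_2) (act : G -> 'I_f -> 'I_f)
  (gA : G -> 'I_f -> 'M[E]_2) (Fil : int -> 'I_(e * f) -> 'M[E]_2)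
  (lo : int) (n : nat) : Prop :=
  forall V, WA_subobject vp phiA NA act gA Fil lo n V -> ~ proper_subobj V.

Definition D2 (E : fieldType) (f : nat) : 'I_f -> 'M[E]_2 :=
  fun _ => delta_mx 0 1.

(* window for the filtration F(x,y;k) with k >= 0 *)
Definition kbound (m : nat) (k : 'I_m -> int) : nat :=
  (\max_(s < m) `|k s|%N).+1.

(* Main.v *)
Require Import Defs.
From HB Require Import structures.
From mathcomp Require Import all_boot all_fingroup all_order all_algebra.
Import Order.TTheory GRing.Theory Num.Theory.
Local Open Scope ring_scope.

Set Implicit Arguments. Unset Strict Implicit. Unset Printing Implicit Defensive.

Lemma tele (n : nat) (g : nat -> int) :
  \sum_(i < n) i%:Z * (g i - g i.+1) = \sum_(i < n) g i.+1 - n%:Z * g n.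
Proof.
elim: n => [|n IH]; first by rewrite !big_ord0 mul0r subr0.
rewrite !big_ord_recr /= IH.
have -> : (n.+1)%:Z = n%:Z + 1 by rewrite -addn1 PoszD.
rewrite mulrBr mulrDl mul1r.
rewrite [_ * g n.+1 + _]addrC opprD !addrA.
by rewrite subrK addrK.
Qed.

Lemma sum_ind (n K c : nat) : (K <= n)%N ->
  \sum_(i < n) (if (i < K)%N then c else 0%N) = (K * c)%N.
Proof.
elim: n => [|n IH] hK.
  by move: hK; rewrite leqn0 => /eqP ->; rewrite big_ord0.
rewrite big_ord_recr /=.
case: (ltnP n K) => hnK.
  have -> : K = n.+1 by apply/eqP; rewrite eqn_leq hK hnK.
  rewrite (eq_bigr (fun _ => c)); last by move=> i _; rewrite ltnS ltnW ?ltn_ord.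
  by rewrite sum_nat_const card_ord mulSn addnC.
by rewrite IH // addr0.
Qed.

Lemma tH_gen (E : fieldType) m (F : int -> 'I_m -> 'M[E]_2) n (K c : 'I_m -> nat) :
 (forall s, K s < n)%N ->
 (forall s (i : nat), (0 < i)%N ->
    \rank (F i%:Z s) = if (i <= K s)%N then c s else 0%N) ->
 tH F 0 n = \sum_s ((K s * c s)%N)%:Z.
Proof.
move=> hK hF; rewrite /tH; apply: eq_bigr => s _.
set g := fun j : nat => (\rank (F j%:Z s))%:Z.
rewrite (eq_bigr (fun i : 'I_n => i%:Z * (g i - g i.+1))); last first.
  by move=> i _; rewrite add0r /g -PoszD addn1.
rewrite tele.
have -> : g n = 0.
  rewrite /g hF; last by apply: leq_ltn_trans (hK s).
  by rewrite leqNgt hK.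
rewrite mulr0 subr0.
rewrite (eq_bigr (fun i : 'I_n => ((if (i < K s)%N then c s else 0%N))%:Z)); last first.
  by move=> i _; rewrite /g hF // ltnS.
rewrite -(big_morph Posz PoszD (erefl 0%:Z)).
by rewrite sum_ind // ltnW.
Qed.

Definition rowxy (E : fieldType) (a b : E) : 'rV[E]_2 :=
  \row_(i < 2) (if i == 0 then a else b).

Lemma rowxy_neq0 (E : fieldType) (a b : E) : (a != 0) || (b != 0) -> rowxy a b != 0.
Proof.
move=> h; apply/eqP => /matrixP H; move: h.
have := H 0 0; have := H 0 1; rewrite !mxE /= => -> ->.
by rewrite eqxx.
Qed.

Lemma rank_line (E : fieldType) (a b : E) : (a != 0) || (b != 0) ->
  \rank (<< rowxy a b >>)%MS = 1%N.
Proof. by move=> h; rewrite genmxE rank_rV rowxy_neq0. Qed.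

Lemma rowx0 (E : fieldType) (b : E) : rowxy 0 b = b *: delta_mx 0 1.
Proof.
apply/matrixP => i j; rewrite !mxE (ord1 i) /=.
by case: j => [[|[|j]] hj] //=; rewrite ?mulr1 ?mulr0.
Qed.

Lemma rank_cap_delta (E : fieldType) (a b : E) : (a != 0) || (b != 0) ->
  \rank ((delta_mx 0 1 : 'rV[E]_2) :&: << rowxy a b >>)%MS = (a == 0).
Proof.
move=> h; case: (eqVneq a 0) => [a0 | an0] /=.
  move: h; rewrite a0 eqxx /= => bn0.
  rewrite (cap_eqmx (eqmx_refl _) (genmxE _)) rowx0.
  rewrite (cap_eqmx (eqmx_refl _) (eqmx_scale _ bn0)).
  by rewrite (capmx_idPl (submx_refl _)) mxrank_delta.
pose C := ((delta_mx 0 1 : 'rV[E]_2) :&: << rowxy a b >>)%MS.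
have hle : (\rank C <= 1)%N.
  by apply: leq_trans (mxrankS (capmxSl _ _)) _; rewrite mxrank_delta.
case: (ltnP 0 (\rank C)) => hr; last first.
  by move: hr; rewrite leqn0 => /eqP.
exfalso.
have eqr : \rank C = \rank (delta_mx 0 1 : 'rV[E]_2).
  by rewrite mxrank_delta; apply/eqP; rewrite eqn_leq hle hr.
have := mxrank_leqif_eq (capmxSl (delta_mx 0 1 : 'rV[E]_2) (<< rowxy a b >>)%MS).
move=> [_]; rewrite eqr eqxx => /esym heq.
have hsub : ((delta_mx 0 1 : 'rV[E]_2) <= C)%MS by move: heq => /andP[].
have := submx_trans hsub (capmxSr _ _).
rewrite genmxE => /submxP [D hD].
have := congr1 (fun M : 'M[E]_(1,2) => M 0 0) hD; have := congr1 (fun M : 'M[E]_(1,2) => M 0 1) hD.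
rewrite !mxE !big_ord1 !mxE /= => h1 h0.
move: h0; move/eqP; rewrite eq_sym mulf_eq0 (negbTE an0) orbF => /eqP D0.
by move: h1; rewrite D0 mul0r; move/eqP; rewrite oner_eq0.
Qed.

Lemma Fil_rank (E : fieldType) m (x y : 'I_m -> E) (k : 'I_m -> int) s (i : nat) :
  (x s != 0) || (y s != 0) -> 0 <= k s -> (0 < i)%N ->
  \rank (Fil_xy x y k i%:Z s) = if (i <= `|k s|)%N then 1%N else 0%N.
Proof.
move=> hxy hk hi; rewrite /Fil_xy.
have -> : (i%:Z <= 0) = false by rewrite lez_nat leqn0; case: i hi.
rewrite -{1}(gez0_abs hk) lez_nat.
case: ifP => _; last by rewrite mxrank0.
exact: (rank_line hxy).
Qed.

Lemma kbound_lt m (k : 'I_m -> int) s : (`|k s| < kbound k)%N.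
Proof. by rewrite /kbound ltnS (leq_bigmax s). Qed.

Lemma sum_abs m (k : 'I_m -> int) : (forall s, 0 <= k s) ->
  \sum_s ((`|k s| * 1)%N)%:Z = \sum_s k s.
Proof. by move=> hk; apply: eq_bigr => s _; rewrite muln1 gez0_abs. Qed.

Lemma sum_abs0 (E : fieldType) m (x : 'I_m -> E) (k : 'I_m -> int) : (forall s, 0 <= k s) ->
  \sum_s ((`|k s| * (x s == 0%R))%N)%:Z = \sum_(s | x s == 0) k s.
Proof.
move=> hk; rewrite [RHS]big_mkcond; apply: eq_bigr => s _.
by case: (x s == 0); rewrite ?muln1 ?muln0 ?gez0_abs.
Qed.

Lemma tH_Fil (E : fieldType) m (x y : 'I_m -> E) (k : 'I_m -> int) :
  (forall s, (x s != 0) || (y s != 0)) -> (forall s, 0 <= k s) ->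
  tH (Fil_xy x y k) 0 (kbound k) = \sum_s k s.
Proof.
move=> hxy hk; rewrite -(sum_abs hk).
apply: tH_gen => [s|s i hi]; first exact: kbound_lt.
by rewrite Fil_rank //; case: ifP.
Qed.

Lemma tH_full (E : fieldType) f e (x y : 'I_(e * f) -> E) (k : 'I_(e * f) -> int)
  (V : 'I_f -> 'M[E]_2) :
  (forall s, (x s != 0) || (y s != 0)) -> (forall s, 0 <= k s) ->
  (forall t, (V t == 1%:M)%MS) ->
  tH (induced V (Fil_xy x y k)) 0 (kbound k) = \sum_s k s.
Proof.
move=> hxy hk hV; rewrite -(sum_abs hk).
apply: tH_gen => [s|s i hi]; first exact: kbound_lt.
rewrite /induced (cap_eqmx (eqmxP (hV _)) (eqmx_refl _)) cap1mx.
by rewrite Fil_rank //; case: ifP.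
Qed.

Lemma tH_D2 (E : fieldType) f e (x y : 'I_(e * f) -> E) (k : 'I_(e * f) -> int)
  (V : 'I_f -> 'M[E]_2) :
  (forall s, (x s != 0) || (y s != 0)) -> (forall s, 0 <= k s) ->
  (forall t, (V t == (delta_mx 0 1 : 'rV[E]_2))%MS) ->
  tH (induced V (Fil_xy x y k)) 0 (kbound k) = \sum_(s | x s == 0) k s.
Proof.
move=> hxy hk hV; rewrite -(sum_abs0 x hk).
apply: tH_gen => [s|s i hi]; first exact: kbound_lt.
rewrite /induced (cap_eqmx (eqmxP (hV _)) (eqmx_refl _)).
rewrite /Fil_xy.
have -> : (i%:Z <= 0) = false by rewrite lez_nat leqn0; case: i hi.
rewrite -{1}(gez0_abs (hk s)) lez_nat.
case: ifP => _; last by rewrite capmx0 mxrank0.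
exact: (rank_cap_delta (hxy s)).
Qed.

Lemma tH_zero (E : fieldType) f e (Fil : int -> 'I_(e * f) -> 'M[E]_2) n
  (V : 'I_f -> 'M[E]_2) :
  (forall t, \rank (V t) = 0%N) -> tH (induced V Fil) 0 n = 0.
Proof.
move=> hV; rewrite /tH big1 // => s _; rewrite big1 // => i _.
have h : forall j, \rank (induced V Fil j s) = 0%N.
  move=> j; apply/eqP; rewrite -leqn0.
  by apply: leq_trans (mxrankS (capmxSl _ _)) _; rewrite hV.
by rewrite !h subrr mulr0.
Qed.

Lemma mx_col_ext (E : fieldType) (X Y : 'M[E]_2) :
  (forall w : 'cV[E]_2, X *m w = Y *m w) -> X = Y.
Proof.
move=> h; apply/matrixP => i j.
have := congr1 (fun M : 'cV[E]_2 => M i 0) (h (delta_mx j 0)).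
by rewrite -!colE !mxE.
Qed.

Lemma ord2 (i : 'I_2) : i = 0 \/ i = 1.
Proof. by case: i => [[|[|i]] hi] //; [left|right]; apply: val_inj. Qed.

Lemma sum2 (E : fieldType) (F : 'I_2 -> E) : \sum_(k < 2) F k = F 0 + F 1.
Proof. by rewrite !big_ord_recl big_ord0 addr0; congr (F _ + F _); apply: val_inj. Qed.

Lemma NM_entry (E : fieldType) f t (M : 'M[E]_2) i j :
  (@N_std E f t *m M) i j = if i == 1 then M 0 j else 0.
Proof.
rewrite mxE sum2 !mxE.
by case: i => [[|[|i]] hi] //=; rewrite ?mul0r ?mul1r ?addr0 ?add0r.
Qed.

Lemma MN_entry (E : fieldType) f t n (M : 'M[E]_(n,2)) i j :
  (M *m @N_std E f t) i j = if j == 0 then M i 1 else 0.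
Proof.
rewrite mxE sum2 !mxE.
by case: j => [[|[|j]] hj] //=; rewrite ?mulr0 ?mulr1 ?addr0 ?add0r; try (congr (M _ _ * _); apply: val_inj).
Qed.

Lemma PM_entry (E : fieldType) f p (d : E) t (M : 'M[E]_2) i j :
  (@phi_diag E f p d t *m M) i j = (if i == 0 then p%:R * d else d) * M i j.
Proof.
rewrite mxE sum2 !mxE.
by case: i => [[|[|i]] hi] //=; rewrite ?mul0r ?mul1r ?addr0 ?add0r; congr (_ * M _ _); apply: val_inj.
Qed.

Lemma MP_entry (E : fieldType) f p (d : E) t n (M : 'M[E]_(n,2)) i j :
  (M *m @phi_diag E f p d t) i j = M i j * (if j == 0 then p%:R * d else d).
Proof.
rewrite mxE sum2 !mxE.
by case: j => [[|[|j]] hj] //=; rewrite ?mulr0 ?mulr1 ?addr0 ?add0r; try (congr (M _ _ * _); apply: val_inj).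
Qed.

Lemma phi_tr (E : fieldType) f p (d : E) t :
  (@phi_diag E f p d t)^T = @phi_diag E f p d t.
Proof.
apply/matrixP => i j; rewrite !mxE eq_sym.
by case: (eqVneq j i) => // ->.
Qed.

Lemma det_phi (E : fieldType) f p (d : E) t :
  \det (@phi_diag E f p d t) = p%:R * d * d.
Proof.
have -> : @phi_diag E f p d t = diag_mx (\row_(i < 2) (if i == 0 then p%:R * d else d)).
  by apply/matrixP => i j; rewrite !mxE; case: (eqVneq i j) => [->|]; rewrite ?mulr1n ?mulr0n.
by rewrite det_diag !big_ord_recl big_ord0 mulr1 !mxE /=.
Qed.

Lemma MNt_entry (E : fieldType) f t n (M : 'M[E]_(n,2)) i j :
  (M *m (@N_std E f t)^T) i j = if j == 1 then M i 0 else 0.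
Proof.
rewrite mxE sum2 !mxE.
by case: (ord2 j) => -> /=; rewrite ?mulr0 ?mulr1 ?addr0 ?add0r.
Qed.

Lemma ordS_const (T : Type) f (hf : (0 < f)%N) (P : 'I_f -> T) :
  (forall t, P (ordS t) = P t) -> forall t, P t = P (Ordinal hf).
Proof.
move=> h [i hi]; elim: i hi => [|i IH] hi.
  by congr P; apply: val_inj.
have -> : Ordinal hi = ordS (Ordinal (ltnW hi)).
  by apply: val_inj; rewrite /= modn_small.
by rewrite h IH.
Qed.

Lemma prod_ordS (E : fieldType) f (F : 'I_f -> E) :
  \prod_t F (ordS t) = \prod_t F t.
Proof. by rewrite [RHS](reindex_inj (@ordS_inj f)). Qed.

Lemma gA_scalar (E : fieldType) f p (d : E) (hf : (0 < f)%N)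
  (hp : p%:R != 0 :> E) (hd : d != 0) (hpf : (p ^ f)%:R != 1 :> E)
  (M : 'I_f -> 'M[E]_2) :
  (forall t, @N_std E f t *m M t = M t *m @N_std E f t) ->
  (forall t, @phi_diag E f p d t *m M (ordS t) = M t *m @phi_diag E f p d t) ->
  forall t, M t = (M (Ordinal hf) 0 0)%:M.
Proof.
move=> hN hP.
have e01 : forall t, M t 0 1 = 0.
  move=> t; have := congr1 (fun X : 'M[E]_2 => X 0 0) (hN t).
  by rewrite NM_entry MN_entry /=.
have e11 : forall t, M t 1 1 = M t 0 0.
  move=> t; have := congr1 (fun X : 'M[E]_2 => X 1 0) (hN t).
  by rewrite NM_entry MN_entry /=.
have pd0 : p%:R * d != 0 by rewrite mulf_neq0.
have e00 : forall t, M (ordS t) 0 0 = M t 0 0.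
  move=> t; have := congr1 (fun X : 'M[E]_2 => X 0 0) (hP t).
  rewrite PM_entry MP_entry /= [RHS]mulrC; exact: (mulfI pd0).
have e10 : forall t, M (ordS t) 1 0 = p%:R * M t 1 0.
  move=> t; have := congr1 (fun X : 'M[E]_2 => X 1 0) (hP t).
  rewrite PM_entry MP_entry /= => h; apply: (mulfI hd).
  by rewrite h mulrC [RHS]mulrA [d * _]mulrC.
have c0 : forall t, M t 1 0 = 0.
  have inv : forall t, (M (ordS t) 1 0 == 0) = (M t 1 0 == 0).
    by move=> t; rewrite e10 mulf_eq0 (negbTE hp).
  have cst := ordS_const hf inv.
  case: (eqVneq (M (Ordinal hf) 1 0) 0) => h0.
    by move=> t; apply/eqP; rewrite cst h0.
  exfalso.
  have nz : forall t, M t 1 0 != 0 by move=> t; rewrite cst h0.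
  have := prod_ordS (fun t => M t 1 0).
  rewrite (eq_bigr (fun t => p%:R * M t 1 0)); last by move=> t _; rewrite e10.
  rewrite big_split /= prodr_const card_ord => /eqP.
  rewrite -subr_eq0 -{2}[\prod_t M t 1 0]mul1r -mulrBl mulf_eq0 subr_eq0.
  rewrite -natrX (negbTE hpf) /= => /prodf_eq0 [t _].
  by rewrite (negbTE (nz t)).
have a0 := ordS_const hf e00.
move=> t; apply/matrixP => i j; rewrite !mxE.
have ea := a0 t.
by case: (ord2 i) => ->; case: (ord2 j) => -> /=;
  rewrite ?e01 ?c0 ?e11 ?ea ?mulr1n ?mulr0n.
Qed.

Lemma part1 (p : nat) (E : fieldType) (G : finGroupType) (f e : nat)
  (act : G -> 'I_f -> 'I_f) (actm : G -> 'I_(e * f) -> 'I_(e * f))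
  (gA : G -> 'I_f -> 'M[E]_2) (delta : E) (Fil : int -> 'I_(e * f) -> 'M[E]_2) :
  prime p -> [pchar E] =i pred0 -> (0 < f)%N -> delta != 0 ->
  Gaction_ok act actm gA (@phi_diag E f p delta) (@N_std E f) Fil ->
  exists chi : G -> E,
        [/\ forall g, chi g != 0,
            forall g h, chi (g * h)%g = chi g * chi h &
            forall g t, gA g t = (chi g)%:M].
Proof.
move=> pp ch0 hf hd [[act1 actM actS] _ [g1 gM gphi gN _]].
have nat0 : forall n, (n%:R == 0 :> E) = (n == 0)%N by apply/pcharf0P.
have hp : p%:R != 0 :> E by rewrite nat0 -lt0n prime_gt0.
have hpf : (p ^ f)%:R != 1 :> E.
  have h1 : (1 < p ^ f)%N by rewrite -{1}(expn0 p) ltn_exp2l ?prime_gt1.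
  by rewrite -subr_eq0 -[X in _ - X]/(1%:R) -natrB ?(ltnW h1) // nat0 subn_eq0 -ltnNge.
have scal : forall g t, gA g t = (gA g (Ordinal hf) 0 0)%:M.
  move=> g; apply: (gA_scalar hf hp hd hpf) => t.
  - apply: mx_col_ext => w; have := gN g (fun _ => w) t.
    by rewrite /lin_op /semi_op !mulmxA.
  - apply: mx_col_ext => w; have := gphi g (fun _ => w) t.
    by rewrite /phi_op /semi_op !mulmxA.
exists (fun g => gA g (Ordinal hf) 0 0).
have c1 : gA 1%g (Ordinal hf) 0 0 = 1.
  have : gA 1%g (Ordinal hf) = 1%:M.
    apply: mx_col_ext => w; have := g1 (fun _ => w) (Ordinal hf).
    by rewrite /semi_op mul1mx.
  by move=> ->; rewrite mxE mulr1n.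
have cM : forall g h, gA (g * h)%g (Ordinal hf) 0 0
                      = gA g (Ordinal hf) 0 0 * gA h (Ordinal hf) 0 0.
  move=> g h.
  have : gA (g * h)%g (Ordinal hf) = gA g (Ordinal hf) *m gA h (act g (Ordinal hf)).
    apply: mx_col_ext => w; have := gM g h (fun _ => w) (Ordinal hf).
    by rewrite /semi_op mulmxA.
  rewrite [gA h _]scal [gA g _]scal -scalar_mxM => /matrixP/(_ 0 0).
  by rewrite !mxE !mulr1n.
split => //.
move=> g; apply/eqP => h0.
have := cM g g^-1%g; rewrite mulgV c1 h0 mul0r.
by move/eqP; rewrite oner_eq0.
Qed.

Lemma vp1 (E : fieldType) (vp : E -> rat) :
  (forall a b : E, a != 0 -> b != 0 -> vp (a * b) = vp a + vp b) -> vp 1 = 0.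
Proof.
move=> hm; have := hm 1 1 (oner_neq0 _) (oner_neq0 _).
rewrite mulr1 => h; apply: (addrI (vp 1)); by rewrite addr0 -h.
Qed.

Lemma vpX (E : fieldType) (vp : E -> rat) (a : E) n :
  (forall a b : E, a != 0 -> b != 0 -> vp (a * b) = vp a + vp b) -> a != 0 ->
  vp (a ^+ n) = vp a *+ n.
Proof.
move=> hm ha; elim: n => [|n IH]; first by rewrite expr0 mulr0n vp1.
by rewrite exprS hm ?expf_neq0 // IH mulrS.
Qed.

Lemma row_eqmx (E : fieldType) n (B : 'M[E]_(n, 2)) (V : 'M[E]_2) :
  (B == V)%MS -> \rank V = \rank B.
Proof. by move/eqmx_rank. Qed.

Lemma rank1_D2 (E : fieldType) f (V : 'I_f -> 'M[E]_2) (B : 'I_f -> 'M[E]_(1, 2)) t :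
  (V t *m (@N_std E f t)^T <= V t)%MS -> row_free (B t) -> (B t == V t)%MS ->
  B t 0 0 = 0 /\ B t 0 1 != 0.
Proof.
move=> hN hfree hBV.
have hBN : (B t *m (@N_std E f t)^T <= B t)%MS.
  case/andP: hBV => hBV1 hBV2.
  apply: submx_trans (submxMr _ hBV1) _; exact: submx_trans hN hBV2.
case/submxP: hBN => D hD.
have h0 := congr1 (fun X : 'M[E]_(1,2) => X 0 0) hD.
have h1 := congr1 (fun X : 'M[E]_(1,2) => X 0 1) hD.
move: h0 h1; rewrite !MNt_entry /= !mxE !big_ord1 => h0 h1.
have b00 : B t 0 0 = 0.
  apply/eqP/negPn/negP => hb.
  move: h0 => /esym/eqP; rewrite mulf_eq0 (negbTE hb) orbF => /eqP D0.
  by move: h1; rewrite D0 mul0r => /eqP; rewrite (negbTE hb).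
split => //; apply/negP => /eqP b01.
move: hfree; rewrite /row_free rank_rV.
have -> : B t = 0.
  apply/matrixP => i j; rewrite (ord1 i) mxE.
  by case: (ord2 j) => ->.
by rewrite eqxx.
Qed.

Lemma tN_rank1 (E : fieldType) (vp : E -> rat) f e p (d : E)
  (B : 'I_f -> 'M[E]_(1, 2)) (A : 'I_f -> 'M[E]_1) :
  (forall a b : E, a != 0 -> b != 0 -> vp (a * b) = vp a + vp b) -> d != 0 ->
  (forall t, B t 0 1 != 0) -> phi_matrix (@phi_diag E f p d) B A ->
  tN vp e A = e%:R * (vp d *+ f).
Proof.
move=> hm hd hb hA; rewrite /tN; congr (_ * _).
have key : forall t, A t 0 0 * B t 0 1 = B (ordS t) 0 1 * d.
  move=> t; have := congr1 (fun X : 'M[E]_(1,2) => X 0 1) (hA t).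
  by rewrite phi_tr MP_entry /= !mxE big_ord1 !mxE => ->.
have nzb : \prod_t B t 0 1 != 0 by apply/prodf_neq0 => t _.
have : \prod_t \det (A t) = d ^+ f.
  apply: (mulIf nzb).
  rewrite (eq_bigr (fun t => A t 0 0)); last by move=> t _; rewrite det_mx11.
  rewrite -big_split /= (eq_bigr (fun t => B (ordS t) 0 1 * d)); last by move=> t _; rewrite key.
  by rewrite big_split /= (prod_ordS (fun t => B t 0 1)) prodr_const card_ord mulrC.
by move=> ->; rewrite vpX.
Qed.

Lemma tN_rank2 (E : fieldType) (vp : E -> rat) f e p (d : E)
  (B : 'I_f -> 'M[E]_2) (A : 'I_f -> 'M[E]_2) :
  (forall a b : E, a != 0 -> b != 0 -> vp (a * b) = vp a + vp b) -> d != 0 ->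
  p%:R != 0 :> E ->
  (forall t, row_free (B t)) -> phi_matrix (@phi_diag E f p d) B A ->
  tN vp e A = e%:R * ((vp p%:R + vp d + vp d) *+ f).
Proof.
move=> hm hd hp hb hA; rewrite /tN; congr (_ * _).
have key : forall t, \det (A t) * \det (B t) = \det (B (ordS t)) * (p%:R * d * d).
  move=> t; have := congr1 (@determinant _ _) (hA t).
  by rewrite !det_mulmx !det_tr det_phi => ->.
have nzB : forall t, \det (B t) != 0.
  by move=> t; rewrite -unitfE -unitmxE -row_free_unit.
have nzb : \prod_t \det (B t) != 0 by apply/prodf_neq0 => t _.
have : \prod_t \det (A t) = (p%:R * d * d) ^+ f.
  apply: (mulIf nzb).
  rewrite -big_split /= (eq_bigr (fun t => \det (B (ordS t)) * (p%:R * d * d))); last by move=> t _; rewrite key.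
  by rewrite big_split /= (prod_ordS (fun t => \det (B t))) prodr_const card_ord mulrC.
by move=> ->; rewrite vpX ?hm ?mulf_neq0.
Qed.

Lemma classify (E : fieldType) (vp : E -> rat) f e p (d : E)
  (V : 'I_f -> 'M[E]_2) r (B : 'I_f -> 'M[E]_(r, 2)) (A : 'I_f -> 'M[E]_r) :
  (forall a b : E, a != 0 -> b != 0 -> vp (a * b) = vp a + vp b) -> d != 0 ->
  p%:R != 0 :> E -> (0 < f)%N ->
  lin_stable (@N_std E f) V -> is_basis V B -> phi_matrix (@phi_diag E f p d) B A ->
  [\/ [/\ r = 0%N, (forall t, \rank (V t) = 0%N) & tN vp e A = 0],
      [/\ r = 1%N, (forall t, (V t == (delta_mx 0 1 : 'rV[E]_2))%MS) &
          tN vp e A = e%:R * (vp d *+ f)]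
    | [/\ r = 2%N, (forall t, (V t == 1%:M)%MS) &
          tN vp e A = e%:R * ((vp p%:R + vp d + vp d) *+ f)]].
Proof.
move=> hm hd hp hf hN hB hA.
have hr : (r <= 2)%N.
  have [hfree _] := hB (Ordinal hf).
  by move: hfree; rewrite /row_free => /eqP <-; apply: rank_leq_col.
have rV : forall t, \rank (V t) = r.
  move=> t; have [hfree hBV] := hB t.
  by rewrite -(eqmx_rank hBV); apply/eqP.
case: r B A hB hA hr rV => [|[|[|r]]] B A hB hA hr rV //.
- apply: Or31; split => //.
  rewrite /tN big1 ?vp1 ?mulr0 // => t _; exact: det_mx00.
- apply: Or32; split => //; last first.
    apply: tN_rank1 => // t.
    have [hfree hBV] := hB t.
    by have [] := rank1_D2 (hN t) hfree hBV.
  move=> t; have [hfree hBV] := hB t.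
  have [b00 b01] := rank1_D2 (hN t) hfree hBV.
  have hBt : B t = B t 0 1 *: (delta_mx 0 1 : 'rV[E]_2).
    apply/matrixP => i j; rewrite (ord1 i) !mxE.
    by case: (ord2 j) => -> /=; rewrite ?b00 ?mulr0 ?mulr1.
  apply/eqmxP; apply: eqmx_trans (eqmx_sym (eqmxP hBV)) _.
  rewrite hBt; exact: eqmx_scale.
- apply: Or33; split => //; last first.
    by apply: tN_rank2 => // t; have [] := hB t.
  move=> t; apply/andP; split; first exact: submx1.
  by rewrite sub1mx /row_full rV.
Qed.

Lemma D2_eq (E : fieldType) f t : (@D2 E f t == (delta_mx 0 1 : 'rV[E]_2))%MS.
Proof.
rewrite /D2; apply/andP; split.
  by apply/submxP; exists (delta_mx 0 0); rewrite mul_delta_mx.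
by apply/submxP; exists (delta_mx 0 0); rewrite mul_delta_mx.
Qed.

Lemma D2_phi (E : fieldType) f p (d : E) : phi_stable (@phi_diag E f p d) (@D2 E f).
Proof.
move=> t; have -> : @D2 E f (ordS t) *m (@phi_diag E f p d t)^T = d *: @D2 E f t.
  apply/matrixP => i j; rewrite phi_tr MP_entry !mxE.
  by case: (ord2 i) => ->; case: (ord2 j) => -> /=; rewrite ?mul0r ?mulr0 ?mulr1 ?mul1r.
exact: scalemx_sub.
Qed.

Lemma D2_N (E : fieldType) f : lin_stable (@N_std E f) (@D2 E f).
Proof.
move=> t; have -> : @D2 E f t *m (@N_std E f t)^T = 0.
  apply/matrixP => i j; rewrite MNt_entry !mxE.
  by case: (ord2 i) => ->; case: (ord2 j) => -> /=.
exact: sub0mx.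
Qed.

Lemma D2_G (E : fieldType) (G : finGroupType) f (act : G -> 'I_f -> 'I_f)
  (gA : G -> 'I_f -> 'M[E]_2) (chi : G -> E) :
  (forall g t, gA g t = (chi g)%:M) -> G_stable act gA (@D2 E f).
Proof.
move=> hg g t; rewrite hg tr_scalar_mx mul_mx_scalar; exact: scalemx_sub.
Qed.

Lemma D2_basis (E : fieldType) f :
  is_basis (@D2 E f) (fun _ => (delta_mx 0 1 : 'rV[E]_2)).
Proof.
move=> t; split; first by rewrite /row_free mxrank_delta.
by have := @D2_eq E f t => /andP [h1 h2]; apply/andP; split.
Qed.

Lemma D2_mat (E : fieldType) f p (d : E) :
  phi_matrix (@phi_diag E f p d) (fun _ => (delta_mx 0 1 : 'rV[E]_2)) (fun _ => d%:M).
Proof.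
move=> t; rewrite tr_scalar_mx mul_scalar_mx.
apply/matrixP => i j; rewrite phi_tr MP_entry !mxE.
have n01 : (0 == 1 :> 'I_2) = false by [].
rewrite (ord1 i) eqxx /=.
by case: (ord2 j) => -> /=; rewrite ?n01 ?eqxx ?mul0r ?mulr0 ?mulr1 ?mul1r // mulrC.
Qed.

Lemma D2_proper (E : fieldType) f : (0 < f)%N -> proper_subobj (@D2 E f).
Proof.
move=> hf h; have := h (Ordinal hf).
by move/eqmx_rank; rewrite (eqmx_rank (@D2_eq E f _)) mxrank_delta mxrank1.
Qed.

Lemma ar1 (e f : nat) (v : rat) : e%:R * (v *+ f) = (e * f)%:R * v.
Proof. by rewrite -[v *+ f]mulr_natr mulrCA natrM mulrC. Qed.

Lemma ar2 (e f : nat) (v : rat) :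
  e%:R * ((1 + v + v) *+ f) = (2 * (e * f))%:R * v + (e * f)%:R.
Proof.
rewrite ar1 !mulrDr mulr1 mul2n -addnn natrD mulrDl.
by rewrite -addrA addrC.
Qed.

Unset Implicit Arguments. Set Strict Implicit. Set Printing Implicit Defensive.

Theorem mainTheorem11 (p : nat) (E : fieldType) (vp : E -> rat)
  (G : finGroupType) (f e : nat)
  (act : G -> 'I_f -> 'I_f) (actm : G -> 'I_(e * f) -> 'I_(e * f))
  (gA : G -> 'I_f -> 'M[E]_2) (delta : E)
  (x y : 'I_(e * f) -> E) (k : 'I_(e * f) -> int) :
  prime p ->
  [pchar E] =i pred0 ->
  (forall a b : E, a != 0 -> b != 0 -> vp (a * b) = vp a + vp b) ->
  vp p%:R = 1 ->
  (0 < f)%N -> (0 < e)%N ->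
  delta != 0 ->
  (forall s, (x s != 0) || (y s != 0)) ->
  (forall s, 0 <= k s) ->
  Gaction_ok act actm gA (@phi_diag E f p delta) (@N_std E f) (Fil_xy x y k) ->
  let phiA := @phi_diag E f p delta in
  let NA := @N_std E f in
  let Fil := Fil_xy x y k in
  let n := kbound k in
  let WA := weakly_admissible vp phiA NA Fil 0 n in
  let ef := (e * f)%N in
  [/\ exists chi : G -> E,
        [/\ forall g, chi g != 0,
            forall g h, chi (g * h)%g = chi g * chi h &
            forall g t, gA g t = (chi g)%:M],
      WA <-> (2 * ef)%:R * vp delta + ef%:R = (\sum_(i < ef) k i)%:~R
             /\ (\sum_(i < ef | x i == 0) k i)%:~R <= ef%:R * vp delta,
      WA -> (irreducible vp phiA NA act gA Fil 0 n <->
             (\sum_(i < ef | x i == 0) k i)%:~R < ef%:R * vp delta) &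
      WA -> (\sum_(i < ef | x i == 0) k i)%:~R = ef%:R * vp delta ->
        [/\ WA_subobject vp phiA NA act gA Fil 0 n (@D2 E f),
            proper_subobj (@D2 E f) &
            forall V, WA_subobject vp phiA NA act gA Fil 0 n V -> proper_subobj V ->
              forall t, (V t == @D2 E f t)%MS]].
Proof.
move=> pp ch0 hm vpp hf he hd hxy hk hG.
cbv zeta.
have nat0 : forall m, (m%:R == 0 :> E) = (m == 0)%N by apply/pcharf0P.
have hp : p%:R != 0 :> E by rewrite nat0 -lt0n prime_gt0.
have [chi [chi0 chiM hchi]] := part1 pp ch0 hf hd hG.
have tHD : tH (Fil_xy x y k) 0 (kbound k) = \sum_s k s := tH_Fil hxy hk.
have tND : tN vp e (@phi_diag E f p delta) = (2 * (e * f))%:R * vp delta + (e * f)%:R.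
  rewrite (@tN_rank2 E vp f e p delta (fun _ => 1%:M) _ hm hd hp) ?vpp ?ar2 //.
  - by move=> t; rewrite row_free_unit unitmx1.
  - by move=> t; rewrite mul1mx mulmx1.
have tHD2 : tH (induced (@D2 E f) (Fil_xy x y k)) 0 (kbound k) = \sum_(s | x s == 0) k s.
  by apply: tH_D2 => // t; exact: D2_eq.
have tND2 : tN vp e (fun _ : 'I_f => delta%:M : 'M[E]_1) = (e * f)%:R * vp delta.
  rewrite (@tN_rank1 E vp f e p delta (fun _ => delta_mx 0 1) _ hm hd) ?ar1 //.
  - by move=> t; rewrite mxE /= oner_neq0.
  - exact: D2_mat.
have D2sub : (\sum_(i < e * f | x i == 0) k i)%:~R = (e * f)%:R * vp delta ->
   WA_subobject vp (@phi_diag E f p delta) (@N_std E f) act gA (Fil_xy x y k) 0 (kbound k) (@D2 E f).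
  move=> heq; split.
  - exists (Ordinal hf); rewrite /D2; apply/eqP => /matrixP /(_ 0 1).
    by rewrite !mxE /= => /eqP; rewrite oner_eq0.
  - exact: D2_phi.
  - exact: D2_N.
  - exact: (D2_G act hchi).
  - exists 1%N, (fun _ => delta_mx 0 1), (fun _ => delta%:M); split.
    + exact: D2_basis.
    + exact: D2_mat.
    + by rewrite tHD2 tND2.
have P2 : weakly_admissible vp (@phi_diag E f p delta) (@N_std E f) (Fil_xy x y k) 0 (kbound k) <->
  (2 * (e * f))%:R * vp delta + (e * f)%:R = (\sum_(i < e * f) k i)%:~R
  /\ (\sum_(i < e * f | x i == 0) k i)%:~R <= (e * f)%:R * vp delta.
  split.
  - move=> [h1 h2]; split.
      by rewrite -tHD h1 tND.
    have := h2 (@D2 E f) (@D2_phi E f p delta) (@D2_N E f) 1%N _ _ (@D2_basis E f) (@D2_mat E f p delta).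
    by rewrite tHD2 tND2.
  - move=> [c1 c2]; split.
      by rewrite tHD tND c1.
    move=> V _ hNV r B A hB hA.
    have [[r0 hV tN0]|[r1 hV tN1]|[r2 hV tN2]] := classify e hm hd hp hf hNV hB hA.
    + by rewrite tH_zero // tN0.
    + by rewrite tH_D2 // tN1 ar1.
    + by rewrite tH_full // tN2 vpp ar2 c1.
split; [by exists chi | exact: P2 | |].
- move=> hWA; have [c1 c2] := (proj1 P2) hWA; split.
  + move=> hirr; rewrite lt_def c2 andbT; apply/eqP => heq.
    by apply: (hirr _ (D2sub (esym heq))); exact: D2_proper.
  + move=> hlt V [[t0 hVt0] _ hNV _ [r [B [A [hB hA heq]]]]].
    have [[r0 hV tN0]|[r1 hV tN1]|[r2 hV tN2]] := classify e hm hd hp hf hNV hB hA.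
    * by move: hVt0; rewrite -mxrank_eq0 hV.
    * move: heq; rewrite tH_D2 // tN1 ar1 => heq.
      by move: hlt; rewrite heq ltxx.
    * by move=> hpr; apply: hpr.
- move=> hWA heq; split; [exact: D2sub heq | exact: D2_proper |].
  move=> V [[t0 hVt0] _ hNV _ [r [B [A [hB hA _]]]]] hprop t.
  have [[r0 hV tN0]|[r1 hV tN1]|[r2 hV tN2]] := classify e hm hd hp hf hNV hB hA.
  + by move: hVt0; rewrite -mxrank_eq0 hV.
  + apply/eqmxP; apply: eqmx_trans (eqmxP (hV t)) (eqmx_sym (eqmxP (@D2_eq E f t))).
  + by exfalso; apply: hprop.
Qed.
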